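(* Let $t\in\mathbb{C}^\times$ with $t\neq q^{-2k}$ for all integers $k\ge0$. Then the map $T\mapsto\big(T(1),T(Z),\dots,T(Z^{n-1})\big)$ is a linear isomorphism from the space of $g_t$-twisted traces on $\mathcal{A}_+$ onto $\mathbb{C}^n$.
   Context: Let $q\in\mathbb{C}$ with $0<|q|<1$, $P\in\mathbb{C}[z]$ of degree $n\ge1$. $\mathcal{A}_P$ is generated by $u,v,Z,Z^{-1}$ with relations $ZZ^{-1}=Z^{-1}Z=1$, $ZuZ^{-1}=q^2u$, $ZvZ^{-1}=q^{-2}v$, $uv=P(q^{-1}Z)$, $vu=P(qZ)$, and $\mathcal{A}_+$ is its subalgebra generated by $u,v,Z$. $g_t$ is the automorphism $u\mapsto tu$, $v\mapsto t^{-1}v$, $Z\mapsto Z$ (it preserves $\mathcal{A}_+$). A $g_t$-twisted trace on $\mathcal{A}_+$ is a linear $T\colon\mathcal{A}_+\to\mathbb{C}$ with $T(ab)=T(b\,g_t(a))$ for all $a,b\in\mathcal{A}_+$. *)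

(* Defs.v *)
From HB Require Import structures.
From mathcomp Require Import all_boot all_order all_algebra.
From mathcomp Require Import complex.
From mathcomp Require Import reals Rstruct.
Set Implicit Arguments. Unset Strict Implicit. Unset Printing Implicit Defensive.
Import Order.TTheory GRing.Theory Num.Theory.
Local Open Scope ring_scope.

Notation CC := (complex Rdefinitions.R).

Inductive gen := gu | gv | gZ.
Definition gen_eqb (a b : gen) : bool :=
  match a, b with gu, gu | gv, gv | gZ, gZ => true | _, _ => false end.
Lemma gen_eqP : Equality.axiom gen_eqb.
Proof. by case; case; constructor. Qed.
HB.instance Definition _ := hasDecEq.Build gen gen_eqP.

Definition word3 := seq gen.
(* Words in the free algebra on u, v, Z, Z^{-1}: letter [Some g] is the
   generator g, letter [None] is the formal generator Z^{-1}. *)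
Definition word4 := seq (option gen).

(* Finite formal linear combinations (elements of the free algebras). *)
Definition comb3 := seq (CC * word3).
Definition comb4 := seq (CC * word4).

Definition embw (w : word3) : word4 := map Some w.

Definition Pscaled (P : {poly CC}) (c : CC) : comb4 :=
  [seq (P`_i * c ^+ i, embw (nseq i gZ)) | i <- iota 0 (size P)].

(* The defining relations of A_P, as elements r of the free algebra on
   u, v, Z, Z^{-1} (the relation being r = 0). *)
Definition relations (q : CC) (P : {poly CC}) : seq comb4 :=
  [:: [:: (1, [:: Some gZ; None]); (-1, [::])];
      [:: (1, [:: None; Some gZ]); (-1, [::])];
      [:: (1, [:: Some gZ; Some gu; None]); (- q ^+ 2, [:: Some gu])];
      [:: (1, [:: Some gZ; Some gv; None]); (- q ^- 2, [:: Some gv])];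
      (1, [:: Some gu; Some gv]) :: [seq (- x.1, x.2) | x <- Pscaled P q^-1]; (* uv = P(q^-1 Z) *)
      (1, [:: Some gv; Some gu]) :: [seq (- x.1, x.2) | x <- Pscaled P q]]. (* vu = P(q Z) *)

(* An element of the two-sided ideal generated by the relations is a finite
   sum  sum_k c_k * w1_k * r_{j_k} * w2_k ; [ideal_expand] expands it. *)
Definition ideal_expand (q : CC) (P : {poly CC})
  (s : seq (CC * (word4 * nat * word4))) : comb4 :=
  flatten [seq [seq (x.1 * y.1, x.2.1.1 ++ y.2 ++ x.2.2)
               | y <- nth [::] (relations q P) x.2.1.2] | x <- s].

Definition coef4 (p : comb4) (w : word4) : CC :=
  \sum_(x <- p | x.2 == w) x.1.

(* A word4 lies in the subalgebra generated by u, v, Z iff it has no Z^{-1}. *)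
Definition Tbar (T : word3 -> CC) (w : word4) : CC :=
  if None \in w then 0 else T (pmap id w).

(* A linear functional on the free algebra F3 = C<u,v,Z> is the same as a
   function on words.  It descends to A_+ (the subalgebra of A_P generated by
   u, v, Z, i.e. the image of F3 in A_P) iff it vanishes on the kernel of
   F3 -> A_P, i.e. on every element of the ideal of relations (in the free
   algebra on u, v, Z, Z^{-1}) that involves no Z^{-1}. *)
Definition descends (q : CC) (P : {poly CC}) (T : word3 -> CC) : Prop :=
  forall s, (forall w : word4, None \in w -> coef4 (ideal_expand q P s) w = 0) ->
    \sum_(x <- ideal_expand q P s) x.1 * Tbar T x.2 = 0.

Definition evalT (T : word3 -> CC) (p : comb3) : CC := \sum_(x <- p) x.1 * T x.2.

Definition mulc (a b : comb3) : comb3 :=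
  [seq (x.1 * y.1, x.2 ++ y.2) | x <- a, y <- b].

Definition wdeg (w : word3) : int := (count_mem gu w)%:Z - (count_mem gv w)%:Z.
Definition gtw (t : CC) (a : comb3) : comb3 := [seq (x.1 * t ^ wdeg x.2, x.2) | x <- a].

Definition twisted_trace (q : CC) (P : {poly CC}) (t : CC) (T : word3 -> CC) : Prop :=
  descends q P T /\
  forall a b : comb3, evalT T (mulc a b) = evalT T (mulc b (gtw t a)).

(* Main.v *)
Require Import Defs.
From HB Require Import structures.
From mathcomp Require Import all_boot all_order all_algebra.
From mathcomp Require Import complex.
From mathcomp Require Import reals Rstruct.
From Stdlib Require Import FunctionalExtensionality.
From mathcomp Require Import ring lra zify.
Import Order.TTheory GRing.Theory Num.Theory.
Local Open Scope ring_scope.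

Set Implicit Arguments. Unset Strict Implicit. Unset Printing Implicit Defensive.


Definition ldeg (g : option gen) : int :=
  match g with Some gu => 1 | Some gv => -1 | _ => 0 end.
Definition deg4 (w : word4) : int := \sum_(g <- w) ldeg g.

Definition sP (P : {poly CC}) (c : CC) (l : int -> CC) (m : int) : CC :=
  \sum_(i <- iota 0 (size P)) P`_i * c ^+ i * l (m + i%:Z).

Definition tr (q : CC) (P : {poly CC}) (g : option gen) (d : int)
  (l : int -> CC) : int -> CC :=
  match g with
  | Some gZ => fun m => l (m + 1)
  | None => fun m => l (m - 1)
  | Some gu => fun m => q ^ (-2 * m) * (if d < 0 then sP P q^-1 l m else l m)
  | Some gv => fun m => q ^ (2 * m) * (if 0 < d then sP P q l m else l m)
  end.

Fixpoint Gp (q : CC) (P : {poly CC}) (w : word4) (d : int) (l : int -> CC)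
  : int -> CC :=
  match w with
  | [::] => l
  | g :: w' => Gp q P w' d (tr q P g (deg4 w' + d) l)
  end.

Lemma deg4_cons g w : deg4 (g :: w) = ldeg g + deg4 w.
Proof. by rewrite /deg4 big_cons. Qed.
Lemma deg4_cat w1 w2 : deg4 (w1 ++ w2) = deg4 w1 + deg4 w2.
Proof. by rewrite /deg4 big_cat. Qed.

Lemma Gp_cat q P w1 w2 d l :
  Gp q P (w1 ++ w2) d l = Gp q P w2 d (Gp q P w1 (deg4 w2 + d) l).
Proof.
elim: w1 l => [|g w1 IH] l //=.
by rewrite IH deg4_cat addrA.
Qed.

Lemma sP_lin P c a l1 l2 m :
  sP P c (fun j => a * l1 j + l2 j) m = a * sP P c l1 m + sP P c l2 m.
Proof.
rewrite /sP mulr_sumr -big_split /=; apply: eq_bigr => i _; ring.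
Qed.

Lemma tr_lin q P g d a l1 l2 :
  tr q P g d (fun j => a * l1 j + l2 j) =
  (fun j => a * tr q P g d l1 j + tr q P g d l2 j).
Proof.
apply: functional_extensionality => m.
case: g => [[]|] /=; rewrite ?sP_lin; try case: ifP => _; rewrite ?sP_lin; ring.
Qed.



Lemma tr_0 q P g d : tr q P g d (fun _ => 0) = (fun _ => 0).
Proof.
apply: functional_extensionality => m.
case: g => [[]|] //=; rewrite /sP big1 ?if_same ?mulr0 //; by move=> i _; rewrite mulr0.
Qed.

Lemma Gp_lin q P w d a l1 l2 :
  Gp q P w d (fun j => a * l1 j + l2 j) =
  (fun j => a * Gp q P w d l1 j + Gp q P w d l2 j).
Proof. by elim: w l1 l2 => [|g w IH] l1 l2 //=; rewrite tr_lin IH. Qed.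

Lemma Gp_0 q P w d : Gp q P w d (fun _ => 0) = (fun _ => 0).
Proof. by elim: w => [|g w IH] //=; rewrite tr_0 IH. Qed.

Lemma Gp_sum (I : Type) q P w d (r : seq I) (a : I -> CC) (L : I -> int -> CC) :
  Gp q P w d (fun m => \sum_(i <- r) a i * L i m) =
  (fun m => \sum_(i <- r) a i * Gp q P w d (L i) m).
Proof.
elim: r => [|i r IH].
  rewrite (_ : (fun m => \sum_(i <- [::]) a i * L i m) = fun _ => 0); last first.
    by apply: functional_extensionality => m; rewrite big_nil.
  by rewrite Gp_0; apply: functional_extensionality => m; rewrite big_nil.
rewrite (_ : (fun m => \sum_(j <- i :: r) a j * L j m) =
   fun m => a i * L i m + \sum_(j <- r) a j * L j m); last first.
  by apply: functional_extensionality => m; rewrite big_cons.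
rewrite Gp_lin IH; apply: functional_extensionality => m; by rewrite big_cons.
Qed.

Definition Phi q P (tau : int -> CC) (w : word4) : CC :=
  if deg4 w == 0 then Gp q P w 0 tau 0 else 0.

Lemma deg4_nil : deg4 [::] = 0.
Proof. by rewrite /deg4 big_nil. Qed.

Lemma rel_vanish q P tau (r : comb4) D a b :
  (forall y, y \in r -> deg4 y.2 = D) ->
  (forall e l m, \sum_(y <- r) y.1 * Gp q P y.2 e l m = 0) ->
  \sum_(y <- r) y.1 * Phi q P tau (a ++ y.2 ++ b) = 0.
Proof.
move=> hD hS.
rewrite big_seq.
under eq_bigr => y yr.
  rewrite /Phi !deg4_cat (hD _ yr) Gp_cat Gp_cat deg4_cat (hD _ yr).
  over.
rewrite -big_seq /=.
case: eqP => _; last by rewrite big1 // => y _; rewrite mulr0.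
have := Gp_sum q P b 0 r (fun y => y.1)
  (fun y => Gp q P y.2 (deg4 b + 0) (Gp q P a (D + deg4 b + 0) tau)).
move/(congr1 (fun f => f 0)) => /= <-.
rewrite (_ : (fun m => _) = fun _ => 0) ?Gp_0 //.
by apply: functional_extensionality => m; apply: hS.
Qed.

Lemma qz (q : CC) (a b : int) : q != 0 -> q ^ a * q ^ b = q ^ (a + b).
Proof. by move=> h; rewrite expfzDr. Qed.

Lemma qn (q : CC) (i : nat) : q ^+ i = q ^ (i%:Z).
Proof. by rewrite exprnP. Qed.
Lemma qVn (q : CC) (i : nat) : q^-1 ^+ i = q ^ (- i%:Z).
Proof. by rewrite exprVn exprnN. Qed.

Lemma sP_shift P c l m :
  sP P c (fun j => l (j + 1)) (m - 1) = sP P c l m.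
Proof.
by apply: eq_bigr => i _; congr (_ * l _); rewrite addrAC subrK.
Qed.
Lemma sP_shift' P c l m :
  sP P c (fun j => l (j - 1)) (m + 1) = sP P c l m.
Proof.
by apply: eq_bigr => i _; congr (_ * l _); rewrite addrAC addrK.
Qed.


Lemma Gp_Zn q P i e l m : Gp q P (embw (nseq i gZ)) e l m = l (m + i%:Z).
Proof.
elim: i l m => [|i IH] l m /=; first by rewrite addr0.
by rewrite IH addrAC -addrA -intS.
Qed.

Ltac dsimp := rewrite ?deg4_cons ?deg4_nil /= ?addr0 ?add0r.

Lemma rel0 q P e l m :
  \sum_(y <- [:: (1, [:: Some gZ; None]); (-1, [::])]) y.1 * Gp q P y.2 e l m = 0.
Proof. rewrite !big_cons big_nil /=; dsimp; rewrite subrK; ring. Qed.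

Lemma rel1 q P e l m :
  \sum_(y <- [:: (1, [:: None; Some gZ]); (-1, [::])]) y.1 * Gp q P y.2 e l m = 0.
Proof. rewrite !big_cons big_nil /=; dsimp; rewrite addrK; ring. Qed.

Lemma rel2 q P e l m : q != 0 ->
  \sum_(y <- [:: (1, [:: Some gZ; Some gu; None]); (- q ^+ 2, [:: Some gu])])
     y.1 * Gp q P y.2 e l m = 0.
Proof.
move=> q0; rewrite !big_cons big_nil /=; dsimp.
rewrite sP_shift subrK.
have -> : q ^ (-2 * (m - 1)) = q ^+ 2 * q ^ (-2 * m).
  by rewrite qn qz //; congr (_ ^ _); ring.
ring.
Qed.

Lemma rel3 q P e l m : q != 0 ->
  \sum_(y <- [:: (1, [:: Some gZ; Some gv; None]); (- q ^- 2, [:: Some gv])])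
     y.1 * Gp q P y.2 e l m = 0.
Proof.
move=> q0; rewrite !big_cons big_nil /=; dsimp.
rewrite sP_shift subrK.
have -> : q ^ (2 * (m - 1)) = q ^- 2 * q ^ (2 * m).
  by rewrite exprnN qz //; congr (_ ^ _); ring.
ring.
Qed.

Lemma sum_Pscaled q P c e l m :
  \sum_(y <- [seq (- x.1, x.2) | x <- Pscaled P c]) y.1 * Gp q P y.2 e l m
  = - sP P c l m.
Proof.
rewrite /Pscaled !big_map /sP -sumrN; apply: eq_bigr => i _ /=.
by rewrite Gp_Zn mulNr.
Qed.

Lemma rel4 q P e l m : q != 0 ->
  \sum_(y <- (1, [:: Some gu; Some gv]) :: [seq (- x.1, x.2) | x <- Pscaled P q^-1])
     y.1 * Gp q P y.2 e l m = 0.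
Proof.
move=> q0; rewrite big_cons sum_Pscaled /=; dsimp.
case: ifP => he.
  have -> : (-1 + e < 0) = false by apply/negbTE; rewrite -leNgt; lia.
  rewrite /sP mulr_sumr mul1r -sumrB big1 // => i _.
  have E : q ^ (2 * m) * (q ^ (i%:Z) * q ^ (-2 * (m + i%:Z))) = q ^ (- i%:Z).
    by rewrite !qz //; congr (_ ^ _); ring.
  rewrite qn qVn -E; ring.
have -> : (-1 + e < 0) = true by move/negbT: he; rewrite -leNgt; lia.
have E : q ^ (2 * m) * q ^ (-2 * m) = 1.
  by rewrite qz // (_ : 2 * m + -2 * m = 0) ?expr0z //; ring.
rewrite mulrA E; ring.
Qed.

Lemma rel5 q P e l m : q != 0 ->
  \sum_(y <- (1, [:: Some gv; Some gu]) :: [seq (- x.1, x.2) | x <- Pscaled P q])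
     y.1 * Gp q P y.2 e l m = 0.
Proof.
move=> q0; rewrite big_cons sum_Pscaled /=; dsimp.
case: ifP => he.
  have -> : (0 < 1 + e) = false by apply/negbTE; rewrite -leNgt; lia.
  rewrite /sP mulr_sumr mul1r -sumrB big1 // => i _.
  have E : q ^ (-2 * m) * (q ^ (- i%:Z) * q ^ (2 * (m + i%:Z))) = q ^ (i%:Z).
    by rewrite !qz //; congr (_ ^ _); ring.
  rewrite qVn qn -E; ring.
have -> : (0 < 1 + e) = true by move/negbT: he; rewrite -leNgt; lia.
have E : q ^ (-2 * m) * q ^ (2 * m) = 1.
  by rewrite qz // (_ : -2 * m + 2 * m = 0) ?expr0z //; ring.
rewrite mulrA E; ring.
Qed.

Lemma rels_vanish q P tau j a b : q != 0 ->
  \sum_(y <- nth [::] (relations q P) j) y.1 * Phi q P tau (a ++ y.2 ++ b) = 0.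
Proof.
move=> q0.
case: j => [|[|[|[|[|[|j]]]]]] /=.
- apply: (@rel_vanish _ _ _ _ 0) => [y|e l m]; last exact: rel0.
  by rewrite !inE => /orP[]/eqP -> /=; dsimp.
- apply: (@rel_vanish _ _ _ _ 0) => [y|e l m]; last exact: rel1.
  by rewrite !inE => /orP[]/eqP -> /=; dsimp.
- apply: (@rel_vanish _ _ _ _ 1) => [y|e l m]; last exact: rel2.
  by rewrite !inE => /orP[]/eqP -> /=; dsimp.
- apply: (@rel_vanish _ _ _ _ (-1)) => [y|e l m]; last exact: rel3.
  by rewrite !inE => /orP[]/eqP -> /=; dsimp.
- apply: (@rel_vanish _ _ _ _ 0) => [y|e l m]; last exact: rel4.
  rewrite inE => /orP[/eqP -> /=|]; first by dsimp.
  rewrite /Pscaled -map_comp => /mapP[i _ ->] /=.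
  by elim: i => [|i IH] /=; dsimp.
- apply: (@rel_vanish _ _ _ _ 0) => [y|e l m]; last exact: rel5.
  rewrite inE => /orP[/eqP -> /=|]; first by dsimp.
  rewrite /Pscaled -map_comp => /mapP[i _ ->] /=.
  by elim: i => [|i IH] /=; dsimp.
- by rewrite nth_nil big_nil.
Qed.


Definition T3 q P tau (w : word3) : CC := Phi q P tau (embw w).

Lemma emb_pmap (w : word4) : None \notin w -> embw (pmap id w) = w.
Proof.
elim: w => [|[g|] w IH] //=; rewrite inE negb_or => /andP[_ h].
by rewrite IH.
Qed.

Lemma Tbar_T3 q P tau w :
  Tbar (T3 q P tau) w = if None \in w then 0 else Phi q P tau w.
Proof. by rewrite /Tbar /T3; case: ifP => // /negbT /emb_pmap ->. Qed.

Lemma group_sum (L : comb4) (h : word4 -> CC) :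
  \sum_(x <- L) x.1 * h x.2 =
  \sum_(w <- undup (map snd L)) coef4 L w * h w.
Proof.
rewrite /coef4.
under [RHS]eq_bigr => w _ do rewrite big_mkcond /= mulr_suml.
rewrite exchange_big /= [RHS]big_seq [LHS]big_seq; apply: eq_bigr => x xL.
have xU : x.2 \in undup (map snd L) by rewrite mem_undup; apply: map_f.
rewrite (bigD1_seq _ xU (undup_uniq _)) /= eqxx big1 ?addr0 //.
by move=> w /negbTE; rewrite eq_sym => ->; rewrite mul0r.
Qed.

Lemma descends_T3 q P tau : q != 0 -> descends q P (T3 q P tau).
Proof.
move=> q0 s hs.
set L := ideal_expand q P s.
have E : forall x : CC * word4, x.1 * Tbar (T3 q P tau) x.2 =
   x.1 * Phi q P tau x.2 - x.1 * (if None \in x.2 then Phi q P tau x.2 else 0).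
  by move=> x; rewrite Tbar_T3; case: ifP => _; ring.
rewrite (eq_bigr _ (fun x _ => E x)) sumrB.
have -> : \sum_(x <- L) x.1 * Phi q P tau x.2 = 0.
  rewrite /L /ideal_expand big_flatten big_map big1 // => x _.
  rewrite big_map /=.
  under eq_bigr => y _ do rewrite -mulrA.
  by rewrite -mulr_sumr rels_vanish // mulr0.
rewrite (group_sum L (fun w => if None \in w then Phi q P tau w else 0)).
rewrite big1 ?subrr // => w _.
by case: ifP => h; [rewrite hs // mul0r | rewrite mulr0].
Qed.


Lemma Gp_scale q P w d c l :
  Gp q P w d (fun j => c * l j) = (fun j => c * Gp q P w d l j).
Proof.
have := Gp_lin q P w d c l (fun _ => 0); rewrite Gp_0.
have -> : (fun j => c * l j + 0) = (fun j => c * l j).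
  by apply: functional_extensionality => j; rewrite addr0.
move=> ->; apply: functional_extensionality => j; by rewrite addr0.
Qed.

Lemma sP_sh P c l (m : int) (k : int) :
  sP P c (fun j => l (j + k)) m = sP P c l (m + k).
Proof. by apply: eq_bigr => i _; congr (_ * l _); rewrite addrAC. Qed.

Lemma tr_shift q P g e l : q != 0 ->
  tr q P g e (fun j => l (j + 1)) =
  (fun j => q ^ (2 * ldeg g) * tr q P g e l (j + 1)).
Proof.
move=> q0; apply: functional_extensionality => j.
case: g => [[]|] /=; rewrite ?mulr0 ?expr0z ?mul1r ?sP_sh //.
- rewrite mulrA qz //; congr (q ^ _ * _); ring.
- rewrite mulrA qz //; congr (q ^ _ * _); ring.
- by rewrite addrAC.
Qed.

Lemma Gp_shift q P w d l m : q != 0 ->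
  Gp q P w d (fun j => l (j + 1)) m = q ^ (2 * deg4 w) * Gp q P w d l (m + 1).
Proof.
move=> q0; elim: w l m => [|g w IH] l m /=; first by rewrite deg4_nil mulr0 expr0z mul1r.
rewrite tr_shift // Gp_scale IH deg4_cons mulrA qz //; congr (q ^ _ * _); ring.
Qed.

Definition cu q (P : {poly CC}) (d : int) (i : nat) : CC :=
  if d < 0 then P`_i * q ^ ((-2 * d - 1) * i%:Z) else (i == 0%N)%:R.
Definition cv q (P : {poly CC}) (d : int) (i : nat) : CC :=
  if 0 < d then P`_i * q ^ ((1 - 2 * d) * i%:Z) else (i == 0%N)%:R.

Lemma sum_delta (P : {poly CC}) (F : nat -> CC) : (0 < size P)%N ->
  \sum_(i <- iota 0 (size P)) (i == 0%N)%:R * F i = F 0%N.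
Proof.
move=> h; rewrite (_ : iota 0 (size P) = 0%N :: iota 1 (size P).-1); last first.
  by move: h; case: (size P).
rewrite big_cons eqxx mul1r big1_seq ?addr0 //= => i.
by rewrite mem_iota => /andP[h1 _]; case: i h1 => // i _; rewrite mul0r.
Qed.

Lemma addz0 (k : int) : k + 0%N = k.
Proof. exact: (addr0 k). Qed.

Lemma LU_u (q : CC) (P : {poly CC}) (e : int) (l : int -> CC) (j : int) : q != 0 -> (0 < size P)%N ->
  \sum_(i <- iota 0 (size P)) cu q P e i * tr q P (Some gu) (e + 1) l (j + i%:Z) =
  \sum_(i <- iota 0 (size P)) cu q P (1 + e) i * tr q P (Some gu) e (fun k => l (k + i%:Z)) j.
Proof.
move=> q0 sP0; rewrite /cu /=.
case: (ltrgtP e (- 1)) => he.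
  have -> : (e < 0) = true by lia.
  have -> : (1 + e < 0) = true by lia.
  have -> : (e + 1 < 0) = true by lia.
  apply: eq_bigr => i _; rewrite sP_sh.
  have E : q ^ ((-2 * e - 1) * i%:Z) * q ^ (-2 * (j + i%:Z)) =
           q ^ ((-2 * (1 + e) - 1) * i%:Z) * q ^ (-2 * j).
    by rewrite !qz //; congr (_ ^ _); ring.
  transitivity (P`_i * (q ^ ((-2 * e - 1) * i%:Z) * q ^ (-2 * (j + i%:Z))) *
     sP P q^-1 l (j + i%:Z)); first ring.
  rewrite E; ring.
- have -> : (e < 0) = false by lia.
  have -> : (1 + e < 0) = false by lia.
  have -> : (e + 1 < 0) = false by lia.
  by rewrite !sum_delta // !addr0.
- have -> : (e < 0) = true by lia.
  have -> : (1 + e < 0) = false by lia.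
  have -> : (e + 1 < 0) = false by lia.
  rewrite sum_delta //= /sP mulr_sumr; apply: eq_bigr => i _.
  rewrite addz0 qVn.
  have E : q ^ ((-2 * e - 1) * i%:Z) * q ^ (-2 * (j + i%:Z)) =
           q ^ (-2 * j) * q ^ (- i%:Z).
    by rewrite !qz //; congr (_ ^ _); nia.
  transitivity (P`_i * (q ^ ((-2 * e - 1) * i%:Z) * q ^ (-2 * (j + i%:Z))) *
     l (j + i%:Z)); first ring.
  rewrite E; ring.
Qed.

Lemma LU_Z (q : CC) (P : {poly CC}) (e : int) (l : int -> CC) (j : int) :
  \sum_(i <- iota 0 (size P)) cu q P e i * tr q P (Some gZ) (e + 1) l (j + i%:Z) =
  \sum_(i <- iota 0 (size P)) cu q P (0 + e) i * tr q P (Some gZ) e (fun k => l (k + i%:Z)) j.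
Proof. rewrite add0r; apply: eq_bigr => i _ /=; by rewrite addrAC. Qed.

Lemma LU_N (q : CC) (P : {poly CC}) (e : int) (l : int -> CC) (j : int) :
  \sum_(i <- iota 0 (size P)) cu q P e i * tr q P None (e + 1) l (j + i%:Z) =
  \sum_(i <- iota 0 (size P)) cu q P (0 + e) i * tr q P None e (fun k => l (k + i%:Z)) j.
Proof. rewrite add0r; apply: eq_bigr => i _ /=; by rewrite addrAC. Qed.

Lemma LU_v (q : CC) (P : {poly CC}) (e : int) (l : int -> CC) (j : int) :
  q != 0 -> (0 < size P)%N ->
  \sum_(i <- iota 0 (size P)) cu q P e i * tr q P (Some gv) (e + 1) l (j + i%:Z) =
  \sum_(i <- iota 0 (size P)) cu q P (-1 + e) i * tr q P (Some gv) e (fun k => l (k + i%:Z)) j.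
Proof.
move=> q0 sP0; rewrite /cu /=.
case: (ltrgtP e 0) => he.
- try (have -> : (e < 0) = true by lia).
  try (have -> : (-1 + e < 0) = true by lia).
  try (have -> : (0 < e + 1) = false by lia).
  try (have -> : (0 < e) = false by lia).
  apply: eq_bigr => i _.
  have E : q ^ ((-2 * e - 1) * i%:Z) * q ^ (2 * (j + i%:Z)) =
           q ^ ((-2 * (-1 + e) - 1) * i%:Z) * q ^ (2 * j).
    by rewrite !qz //; congr (_ ^ _); ring.
  transitivity (P`_i * (q ^ ((-2 * e - 1) * i%:Z) * q ^ (2 * (j + i%:Z))) *
     l (j + i%:Z)); first ring.
  rewrite E; ring.
- try (have -> : (e < 0) = false by lia).
  try (have -> : (-1 + e < 0) = false by lia).
  try (have -> : (0 < e + 1) = true by lia).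
  try (have -> : (0 < e) = true by lia).
  by rewrite !sum_delta // !addz0 sP_sh addz0.
- try (have -> : (e < 0) = false by lia).
  try (have -> : (-1 + e < 0) = true by lia).
  try (have -> : (0 < e + 1) = true by lia).
  try (have -> : (0 < e) = false by lia).
  rewrite sum_delta //= !addz0 /sP mulr_sumr; apply: eq_bigr => i _.
  rewrite qn.
  have E : q ^ (2 * j) * q ^ (i%:Z) = q ^ ((-2 * (-1 + e) - 1) * i%:Z) * q ^ (2 * j).
    by rewrite !qz //; congr (_ ^ _); nia.
  transitivity (P`_i * (q ^ (2 * j) * q ^ (i%:Z)) * l (j + i%:Z)); first ring.
  rewrite E; ring.
Qed.

Lemma LU (q : CC) (P : {poly CC}) g (e : int) (l : int -> CC) (j : int) :
  q != 0 -> (0 < size P)%N ->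
  \sum_(i <- iota 0 (size P)) cu q P e i * tr q P g (e + 1) l (j + i%:Z) =
  \sum_(i <- iota 0 (size P)) cu q P (ldeg g + e) i * tr q P g e (fun k => l (k + i%:Z)) j.
Proof.
move=> q0 sP0; case: g => [[]|].
- exact: LU_u.
- exact: LU_v.
- exact: LU_Z.
- exact: LU_N.
Qed.

Lemma RU (q : CC) (P : {poly CC}) w (d : int) (l : int -> CC) (m : int) :
  q != 0 -> (0 < size P)%N ->
  \sum_(i <- iota 0 (size P)) cu q P d i * Gp q P w (d + 1) l (m + i%:Z) =
  \sum_(i <- iota 0 (size P)) cu q P (deg4 w + d) i * Gp q P w d (fun k => l (k + i%:Z)) m.
Proof.
move=> q0 sP0; elim: w l m => [|g w IH] l m /=.
  by rewrite deg4_nil add0r.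
rewrite IH.
transitivity (Gp q P w d (fun k => \sum_(i <- iota 0 (size P))
   cu q P (deg4 w + d) i * tr q P g (deg4 w + (d + 1)) l (k + i%:Z)) m).
  by rewrite Gp_sum.
transitivity (Gp q P w d (fun k => \sum_(i <- iota 0 (size P))
   cu q P (deg4 (g :: w) + d) i * tr q P g (deg4 w + d) (fun k => l (k + i%:Z)) k) m);
  last by rewrite Gp_sum.
congr (Gp _ _ _ _ _ _); apply: functional_extensionality => k.
by rewrite addrA LU // deg4_cons addrA.
Qed.

Ltac bl := repeat match goal with
  | |- context [ if ?c then _ else _ ] =>
      first [ rewrite (_ : c = true); last by lia
            | rewrite (_ : c = false); last by lia ]
  end.

Lemma LV_u (q : CC) (P : {poly CC}) (e : int) (l : int -> CC) (j : int) :
  q != 0 -> (0 < size P)%N ->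
  \sum_(i <- iota 0 (size P)) cv q P e i * tr q P (Some gu) (e - 1) l (j + i%:Z) =
  \sum_(i <- iota 0 (size P)) cv q P (1 + e) i * tr q P (Some gu) e (fun k => l (k + i%:Z)) j.
Proof.
move=> q0 sP0; rewrite /cv /=.
case: (ltrgtP e 0) => he; bl.
- by rewrite !sum_delta // ?addz0 ?sP_sh ?addz0.
- apply: eq_bigr => i _.
  have E : q ^ ((1 - 2 * e) * i%:Z) * q ^ (-2 * (j + i%:Z)) =
           q ^ ((1 - 2 * (1 + e)) * i%:Z) * q ^ (-2 * j).
    by rewrite !qz //; congr (_ ^ _); ring.
  transitivity (P`_i * (q ^ ((1 - 2 * e) * i%:Z) * q ^ (-2 * (j + i%:Z))) *
     l (j + i%:Z)); first ring.
  rewrite E; ring.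
- rewrite sum_delta //= !addz0 /sP mulr_sumr; apply: eq_bigr => i _.
  rewrite qVn.
  have E : q ^ (-2 * j) * q ^ (- i%:Z) = q ^ ((1 - 2 * (1 + e)) * i%:Z) * q ^ (-2 * j).
    by rewrite !qz //; congr (_ ^ _); nia.
  transitivity (P`_i * (q ^ (-2 * j) * q ^ (- i%:Z)) * l (j + i%:Z)); first ring.
  rewrite E; ring.
Qed.

Lemma LV_v (q : CC) (P : {poly CC}) (e : int) (l : int -> CC) (j : int) :
  q != 0 -> (0 < size P)%N ->
  \sum_(i <- iota 0 (size P)) cv q P e i * tr q P (Some gv) (e - 1) l (j + i%:Z) =
  \sum_(i <- iota 0 (size P)) cv q P (-1 + e) i * tr q P (Some gv) e (fun k => l (k + i%:Z)) j.
Proof.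
move=> q0 sP0; rewrite /cv /=.
case: (ltrgtP e 1) => he; bl.
- by rewrite !sum_delta // ?addz0.
- apply: eq_bigr => i _; rewrite sP_sh.
  have E : q ^ ((1 - 2 * e) * i%:Z) * q ^ (2 * (j + i%:Z)) =
           q ^ ((1 - 2 * (-1 + e)) * i%:Z) * q ^ (2 * j).
    by rewrite !qz //; congr (_ ^ _); ring.
  transitivity (P`_i * (q ^ ((1 - 2 * e) * i%:Z) * q ^ (2 * (j + i%:Z))) *
     sP P q l (j + i%:Z)); first ring.
  rewrite E; ring.
- rewrite sum_delta //= /sP mulr_sumr; apply: eq_bigr => i _.
  rewrite addz0 qn.
  have E : q ^ ((1 - 2 * e) * i%:Z) * q ^ (2 * (j + i%:Z)) = q ^ (2 * j) * q ^ (i%:Z).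
    by rewrite !qz //; congr (_ ^ _); nia.
  transitivity (P`_i * (q ^ ((1 - 2 * e) * i%:Z) * q ^ (2 * (j + i%:Z))) * l (j + i%:Z)); first ring.
  rewrite E; ring.
Qed.

Lemma LV (q : CC) (P : {poly CC}) g (e : int) (l : int -> CC) (j : int) :
  q != 0 -> (0 < size P)%N ->
  \sum_(i <- iota 0 (size P)) cv q P e i * tr q P g (e - 1) l (j + i%:Z) =
  \sum_(i <- iota 0 (size P)) cv q P (ldeg g + e) i * tr q P g e (fun k => l (k + i%:Z)) j.
Proof.
move=> q0 sP0; case: g => [[]|].
- exact: LV_u.
- exact: LV_v.
- by rewrite /= add0r; apply: eq_bigr => i _ /=; rewrite addrAC.
- by rewrite /= add0r; apply: eq_bigr => i _ /=; rewrite addrAC.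
Qed.

Lemma RV (q : CC) (P : {poly CC}) w (d : int) (l : int -> CC) (m : int) :
  q != 0 -> (0 < size P)%N ->
  \sum_(i <- iota 0 (size P)) cv q P d i * Gp q P w (d - 1) l (m + i%:Z) =
  \sum_(i <- iota 0 (size P)) cv q P (deg4 w + d) i * Gp q P w d (fun k => l (k + i%:Z)) m.
Proof.
move=> q0 sP0; elim: w l m => [|g w IH] l m /=.
  by rewrite deg4_nil add0r.
rewrite IH.
transitivity (Gp q P w d (fun k => \sum_(i <- iota 0 (size P))
   cv q P (deg4 w + d) i * tr q P g (deg4 w + (d - 1)) l (k + i%:Z)) m).
  by rewrite Gp_sum.
transitivity (Gp q P w d (fun k => \sum_(i <- iota 0 (size P))
   cv q P (deg4 (g :: w) + d) i * tr q P g (deg4 w + d) (fun k => l (k + i%:Z)) k) m);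
  last by rewrite Gp_sum.
congr (Gp _ _ _ _ _ _); apply: functional_extensionality => k.
by rewrite addrA LV // deg4_cons addrA.
Qed.


Lemma Gp_supp (q : CC) (P : {poly CC}) (w : word3) (d : int) (l1 l2 : int -> CC) (m0 : int) :
  (forall k, m0 <= k -> l1 k = l2 k) ->
  forall m, m0 <= m -> Gp q P (embw w) d l1 m = Gp q P (embw w) d l2 m.
Proof.
elim: w l1 l2 => [|g w IH] l1 l2 h m hm /=; first exact: h.
apply: IH => // k hk.
have hs : forall c, sP P c l1 k = sP P c l2 k.
  move=> c; apply: eq_bigr => i _; congr (_ * _); apply: h; lia.
case: g => /=; rewrite ?hs ?h //; lia.
Qed.

Lemma deg4_emb (w : word3) : deg4 (embw w) = wdeg w.
Proof.
elim: w => [|g w IH] /=; first by rewrite deg4_nil.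
rewrite deg4_cons IH /wdeg /=.
case: g => /=; rewrite ?add0n ?add1n; lia.
Qed.

Lemma T3_Z q P tau (w : word3) : q != 0 ->
  T3 q P tau (gZ :: w) = T3 q P tau (w ++ [:: gZ]).
Proof.
move=> q0; rewrite /T3 /Phi /embw map_cat -/(embw w) /=.
rewrite deg4_cons deg4_cat deg4_cons deg4_nil /= !add0r !addr0.
case: eqP => // hD.
rewrite Gp_cat /= deg4_cons deg4_nil /= Gp_shift // hD mulr0 expr0z mul1r.
by rewrite add0r addr0.
Qed.

Lemma sum_cu_m1 (q : CC) (P : {poly CC}) (F : nat -> CC) :
  \sum_(i <- iota 0 (size P)) cu q P (- 1) i * F i =
  \sum_(i <- iota 0 (size P)) P`_i * q ^+ i * F i.
Proof.
apply: eq_bigr => i _; rewrite /cu /= qn; congr (_ * q ^ _ * _); lia.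
Qed.

Lemma sum_cv_1 (q : CC) (P : {poly CC}) (F : nat -> CC) :
  \sum_(i <- iota 0 (size P)) cv q P 1 i * F i =
  \sum_(i <- iota 0 (size P)) P`_i * q^-1 ^+ i * F i.
Proof.
apply: eq_bigr => i _; rewrite /cv /= qVn; congr (_ * q ^ _ * _); lia.
Qed.

Lemma T3_u (q : CC) (P : {poly CC}) (t : CC) (tau : int -> CC) (w : word3) : q != 0 -> (0 < size P)%N ->
  (forall m : int, 0 <= m -> q ^ (-2 * m) * sP P q^-1 tau m = t * sP P q tau m) ->
  T3 q P tau (gu :: w) = t * T3 q P tau (w ++ [:: gu]).
Proof.
move=> q0 sP0 Hrec; rewrite /T3 /Phi /embw map_cat -/(embw w) /=.
rewrite deg4_cons deg4_cat deg4_cons deg4_nil /= !addr0 (addrC (deg4 _)).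
case: eqP => hD; last by rewrite mulr0.
rewrite -/(embw w) in hD *.
have hD' : deg4 (embw w) = - 1 by lia.
rewrite Gp_cat /= deg4_nil /= hD' ltrN10 mulr0 expr0z mul1r deg4_cons deg4_nil /= !addr0.
have := @RU q P (embw w) 0 tau 0 q0 sP0.
rewrite hD' addr0 sum_cu_m1 {1}/cu ltxx sum_delta // add0r.
move=> ->.
have -> : \sum_(i <- iota 0 (size P)) P`_i * q ^+ i * Gp q P (embw w) 0 (fun k => tau (k + i%:Z)) 0
   = Gp q P (embw w) 0 (sP P q tau) 0.
  by rewrite /sP Gp_sum.
rewrite (_ : t * Gp q P (embw w) 0 (sP P q tau) 0 =
  Gp q P (embw w) 0 (fun j => t * sP P q tau j) 0); last by rewrite Gp_scale.
apply: Gp_supp => //= k hk.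
by rewrite Hrec.
Qed.

Lemma T3_v (q : CC) (P : {poly CC}) (t : CC) (tau : int -> CC) (w : word3) :
  q != 0 -> t != 0 -> (0 < size P)%N ->
  (forall m : int, 0 <= m -> q ^ (-2 * m) * sP P q^-1 tau m = t * sP P q tau m) ->
  T3 q P tau (gv :: w) = t^-1 * T3 q P tau (w ++ [:: gv]).
Proof.
move=> q0 t0 sP0 Hrec; rewrite /T3 /Phi /embw map_cat -/(embw w) /=.
rewrite deg4_cons deg4_cat deg4_cons deg4_nil /= !addr0 (addrC (deg4 _)).
case: eqP => hD; last by rewrite mulr0.
rewrite -/(embw w) in hD *.
have hD' : deg4 (embw w) = 1 by lia.
rewrite Gp_cat /= deg4_nil /= hD' ltr01 mulr0 expr0z mul1r deg4_cons deg4_nil /= !addr0.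
have := @RV q P (embw w) 0 tau 0 q0 sP0.
rewrite hD' addr0 sum_cv_1 {1}/cv ltxx sum_delta // add0r.
move=> ->.
have -> : \sum_(i <- iota 0 (size P)) P`_i * q^-1 ^+ i * Gp q P (embw w) 0 (fun k => tau (k + i%:Z)) 0
   = Gp q P (embw w) 0 (sP P q^-1 tau) 0.
  by rewrite /sP Gp_sum.
rewrite (_ : t^-1 * Gp q P (embw w) 0 (sP P q^-1 tau) 0 =
  Gp q P (embw w) 0 (fun j => t^-1 * sP P q^-1 tau j) 0); last by rewrite Gp_scale.
apply: Gp_supp => //= k hk.
have E : sP P q^-1 tau k = q ^ (2 * k) * (t * sP P q tau k).
  rewrite -Hrec // mulrA qz // (_ : 2 * k + -2 * k = 0) ?expr0z ?mul1r //; ring.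
by rewrite E; field.
Qed.

Lemma T3_letter (q : CC) (P : {poly CC}) (t : CC) (tau : int -> CC) g (w : word3) :
  q != 0 -> t != 0 -> (0 < size P)%N ->
  (forall m : int, 0 <= m -> q ^ (-2 * m) * sP P q^-1 tau m = t * sP P q tau m) ->
  T3 q P tau (g :: w) = t ^ (ldeg (Some g)) * T3 q P tau (w ++ [:: g]).
Proof.
move=> q0 t0 sP0 Hrec; case: g => /=.
- by rewrite expr1z; apply: T3_u.
- by rewrite exprN1; apply: T3_v.
- by rewrite expr0z mul1r; apply: T3_Z.
Qed.

Lemma T3_tw (q : CC) (P : {poly CC}) (t : CC) (tau : int -> CC) (w1 w2 : word3) :
  q != 0 -> t != 0 -> (0 < size P)%N ->
  (forall m : int, 0 <= m -> q ^ (-2 * m) * sP P q^-1 tau m = t * sP P q tau m) ->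
  T3 q P tau (w1 ++ w2) = t ^ wdeg w1 * T3 q P tau (w2 ++ w1).
Proof.
move=> q0 t0 sP0 Hrec; elim: w1 w2 => [|g w1 IH] w2.
  by rewrite cats0 /wdeg /= subrr expr0z mul1r.
rewrite cat_cons (T3_letter g _ q0 t0 sP0 Hrec) -catA IH -!deg4_emb /= deg4_cons mulrA -expfzDr //.
by rewrite -catA.
Qed.

Lemma T3_twisted (q : CC) (P : {poly CC}) (t : CC) (tau : int -> CC) :
  q != 0 -> t != 0 -> (0 < size P)%N ->
  (forall m : int, 0 <= m -> q ^ (-2 * m) * sP P q^-1 tau m = t * sP P q tau m) ->
  twisted_trace q P t (T3 q P tau).
Proof.
move=> q0 t0 sP0 Hrec; split; first exact: descends_T3.
move=> a b; rewrite /evalT /mulc /gtw !big_allpairs_dep.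
under [RHS]eq_bigr => y _ do rewrite big_map.
rewrite [RHS]exchange_big /=; apply: eq_bigr => x _; apply: eq_bigr => y _ /=.
rewrite (T3_tw x.2 y.2 q0 t0 sP0 Hrec); ring.
Qed.


Definition acoef (q t : CC) (P : {poly CC}) (m i : nat) : CC :=
  P`_i * (q ^ (-2 * m%:Z) * q^-1 ^+ i - t * q ^+ i).

Definition nextv (q t : CC) (P : {poly CC}) (n : nat) (cc : nat -> CC)
  (k : nat) (L : seq CC) : CC :=
  if (k < n)%N then cc k else
  - (\sum_(i <- iota 0 n) acoef q t P (k - n) i * nth 0 L (k - n + i)) /
      acoef q t P (k - n) n.

Fixpoint tl q t P n cc (k : nat) : seq CC :=
  match k with
  | 0 => [::]
  | k'.+1 => rcons (tl q t P n cc k') (nextv q t P n cc k' (tl q t P n cc k'))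
  end.

Definition tn q t P n cc (k : nat) : CC := nth 0 (tl q t P n cc k.+1) k.

Lemma size_tl q t P n cc k : size (tl q t P n cc k) = k.
Proof. by elim: k => //= k IH; rewrite size_rcons IH. Qed.

Lemma tn_next q t P n cc k : tn q t P n cc k = nextv q t P n cc k (tl q t P n cc k).
Proof. by rewrite /tn /= nth_rcons size_tl ltnn eqxx. Qed.

Lemma nth_tl q t P n cc k j : (j < k)%N -> nth 0 (tl q t P n cc k) j = tn q t P n cc j.
Proof.
elim: k => // k IH; rewrite ltnS leq_eqVlt => /orP[/eqP ->|h].
  by [].
by rewrite /= nth_rcons size_tl h IH.
Qed.

Lemma tn_rec q t P n cc m :
  acoef q t P m n != 0 ->
  \sum_(i <- iota 0 n.+1) acoef q t P m i * tn q t P n cc (m + i) = 0.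
Proof.
move=> hn.
rewrite -addn1 iotaD big_cat /= big_cons big_nil addr0 add0n.
rewrite tn_next /nextv ltnNge leq_addl /= addnK.
have E : \sum_(i <- iota 0 n) acoef q t P m i * nth 0 (tl q t P n cc (m + n)) (m + i) =
  \sum_(i <- iota 0 n) acoef q t P m i * tn q t P n cc (m + i).
  rewrite big_seq [RHS]big_seq; apply: eq_bigr => i; rewrite mem_iota => hi.
  by rewrite nth_tl //; lia.
by rewrite E; field.
Qed.

Definition tauf q t P n cc (z : int) : CC :=
  match z with Posz k => tn q t P n cc k | Negz _ => 0 end.

Lemma sP_tauf q t (P : {poly CC}) n cc c (m : nat) :
  sP P c (tauf q t P n cc) m = \sum_(i <- iota 0 (size P)) P`_i * c ^+ i * tn q t P n cc (m + i).
Proof. by apply: eq_bigr => i _; rewrite -PoszD. Qed.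

Lemma tau_rec q t (P : {poly CC}) n cc : size P = n.+1 ->
  (forall m, acoef q t P m n != 0) ->
  forall m : int, 0 <= m ->
    q ^ (-2 * m) * sP P q^-1 (tauf q t P n cc) m = t * sP P q (tauf q t P n cc) m.
Proof.
move=> hP ha [m|m] hm; last by [].

apply/eqP; rewrite -subr_eq0 !sP_tauf !mulr_sumr -sumrB hP.
apply/eqP; rewrite -[RHS](tn_rec cc (ha m)); apply: eq_bigr => i _.
rewrite /acoef; ring.
Qed.

Lemma acoef_nz q t (P : {poly CC}) n : q != 0 -> size P = n.+1 ->
  (forall k : nat, t != q ^- (2 * k)) -> forall m, acoef q t P m n != 0.
Proof.
move=> q0 hP ht m; rewrite /acoef mulf_neq0 //.
  have : lead_coef P != 0 by rewrite lead_coef_eq0 -size_poly_eq0 hP.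
  by rewrite lead_coefE hP.
rewrite subr_eq0; apply/eqP => H; apply: (negP (ht (m + n)%N)); apply/eqP.
rewrite qVn qn in H.
have E1 : t = t * q ^ (n%:Z) * q ^ (- n%:Z) by rewrite -mulrA qz // subrr expr0z mulr1.
rewrite E1 -H exprnN !qz //; congr (_ ^ _); lia.
Qed.

Lemma T3_Zi q t (P : {poly CC}) n cc (i : nat) :
  T3 q P (tauf q t P n cc) (nseq i gZ) = tn q t P n cc i.
Proof.
rewrite /T3 /Phi deg4_emb.
have -> : wdeg (nseq i gZ) = 0.
  by rewrite /wdeg; elim: i => //= i; rewrite /=.
by rewrite eqxx Gp_Zn add0r.
Qed.


Lemma noNone_emb (w : word3) : None \notin embw w.
Proof. by elim: w => //= g w IH; rewrite inE negb_or IH. Qed.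

Lemma Tbar_emb (T : word3 -> CC) (w : word3) : Tbar T (embw w) = T w.
Proof.
rewrite /Tbar (negbTE (noNone_emb w)); congr T.
by elim: w => //= g w ->.
Qed.

Lemma desc_noNone q P (T : word3 -> CC) s : descends q P T ->
  (forall x, x \in ideal_expand q P s -> None \notin x.2) ->
  \sum_(x <- ideal_expand q P s) x.1 * Tbar T x.2 = 0.
Proof.
move=> hT hN; apply: hT => w hw; rewrite /coef4 big_seq_cond big1 // => x.
case/andP=> xL /eqP ex; move: (hN x xL); by rewrite ex hw.
Qed.

Lemma U1 q P (T : word3 -> CC) (a b : word3) : descends q P T ->
  T (a ++ gu :: gv :: b) =
  \sum_(i <- iota 0 (size P)) P`_i * q^-1 ^+ i * T (a ++ nseq i gZ ++ b).
Proof.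
move=> hT.
set L := ideal_expand q P [:: (1, (embw a, 4%N, embw b))].
have hN : forall x, x \in L -> None \notin x.2.
  rewrite /L /ideal_expand /= cats0 => x; rewrite inE => /orP[/eqP -> /=|].
    by rewrite !mem_cat !negb_or !noNone_emb.
  move=> /mapP[y yr ->] /=; move: yr; rewrite /Pscaled -map_comp => /mapP[i _ ->] /=.
  by rewrite !mem_cat !negb_or !noNone_emb.
have := desc_noNone hT hN.
rewrite /L /ideal_expand /= cats0 big_cons /Pscaled !big_map /=.
have -> : embw a ++ [:: Some gu, Some gv & embw b] = embw (a ++ gu :: gv :: b).
  by rewrite /embw map_cat.
rewrite Tbar_emb mul1r mul1r.
have -> : \sum_(j <- iota 0 (size P)) 1 * - (P`_j * q^-1 ^+ j) *
   Tbar T (embw a ++ embw (nseq j gZ) ++ embw b) =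
   - \sum_(i <- iota 0 (size P)) P`_i * q^-1 ^+ i * T (a ++ nseq i gZ ++ b).
  rewrite -sumrN; apply: eq_bigr => i _.
  rewrite (_ : embw a ++ embw (nseq i gZ) ++ embw b = embw (a ++ nseq i gZ ++ b)).
    by rewrite Tbar_emb; ring.
  by rewrite /embw !map_cat.
by move/eqP; rewrite subr_eq0 => /eqP.
Qed.


Lemma U2 q P (T : word3 -> CC) (a b : word3) : descends q P T ->
  T (a ++ gv :: gu :: b) =
  \sum_(i <- iota 0 (size P)) P`_i * q ^+ i * T (a ++ nseq i gZ ++ b).
Proof.
move=> hT.
set L := ideal_expand q P [:: (1, (embw a, 5%N, embw b))].
have hN : forall x, x \in L -> None \notin x.2.
  rewrite /L /ideal_expand /= cats0 => x; rewrite inE => /orP[/eqP -> /=|].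
    by rewrite !mem_cat !negb_or !noNone_emb.
  move=> /mapP[y yr ->] /=; move: yr; rewrite /Pscaled -map_comp => /mapP[i _ ->] /=.
  by rewrite !mem_cat !negb_or !noNone_emb.
have := desc_noNone hT hN.
rewrite /L /ideal_expand /= cats0 big_cons /Pscaled !big_map /=.
have -> : embw a ++ [:: Some gv, Some gu & embw b] = embw (a ++ gv :: gu :: b).
  by rewrite /embw map_cat.
rewrite Tbar_emb mul1r mul1r.
have -> : \sum_(j <- iota 0 (size P)) 1 * - (P`_j * q ^+ j) *
   Tbar T (embw a ++ embw (nseq j gZ) ++ embw b) =
   - \sum_(i <- iota 0 (size P)) P`_i * q ^+ i * T (a ++ nseq i gZ ++ b).
  rewrite -sumrN; apply: eq_bigr => i _.
  rewrite (_ : embw a ++ embw (nseq i gZ) ++ embw b = embw (a ++ nseq i gZ ++ b)).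
    by rewrite Tbar_emb; ring.
  by rewrite /embw !map_cat.
by move/eqP; rewrite subr_eq0 => /eqP.
Qed.

Lemma U3 q P (T : word3 -> CC) (a b : word3) : descends q P T ->
  T (a ++ gZ :: gu :: b) = q ^+ 2 * T (a ++ gu :: gZ :: b).
Proof.
move=> hT.
have := hT [:: (1, (embw a, 2%N, Some gZ :: embw b));
               (-1, (embw a ++ [:: Some gZ; Some gu], 1%N, embw b))].
rewrite /ideal_expand /= -!catA /=.
have -> : embw a ++ [:: Some gu, Some gZ & embw b] = embw (a ++ gu :: gZ :: b).
  by rewrite /embw map_cat.
have -> : embw a ++ [:: Some gZ, Some gu & embw b] = embw (a ++ gZ :: gu :: b).
  by rewrite /embw map_cat.
set W1 := embw a ++ _.
match goal with |- (?A -> _) -> _ => have hA : A end.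
  move=> w hw; rewrite /coef4 !big_cons big_nil /=.
  have nf : forall x : word3, (embw x == w) = false.
    by move=> x; apply/negbTE/eqP => E; move: hw; rewrite -E (negbTE (noNone_emb x)).
  rewrite !nf; case: (W1 == w); ring.
move=> /(_ hA); rewrite !big_cons big_nil /= !Tbar_emb /Tbar.
rewrite (_ : None \in W1) ?mulr0 /=; last by rewrite /W1 mem_cat !inE orbT.
move=> H; apply/eqP; rewrite -subr_eq0; apply/eqP; rewrite -[RHS]H; ring.
Qed.

Lemma U4 q P (T : word3 -> CC) (a b : word3) : descends q P T ->
  T (a ++ gZ :: gv :: b) = q ^- 2 * T (a ++ gv :: gZ :: b).
Proof.
move=> hT.
have := hT [:: (1, (embw a, 3%N, Some gZ :: embw b));
               (-1, (embw a ++ [:: Some gZ; Some gv], 1%N, embw b))].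
rewrite /ideal_expand /= -!catA /=.
have -> : embw a ++ [:: Some gv, Some gZ & embw b] = embw (a ++ gv :: gZ :: b).
  by rewrite /embw map_cat.
have -> : embw a ++ [:: Some gZ, Some gv & embw b] = embw (a ++ gZ :: gv :: b).
  by rewrite /embw map_cat.
set W1 := embw a ++ _.
match goal with |- (?A -> _) -> _ => have hA : A end.
  move=> w hw; rewrite /coef4 !big_cons big_nil /=.
  have nf : forall x : word3, (embw x == w) = false.
    by move=> x; apply/negbTE/eqP => E; move: hw; rewrite -E (negbTE (noNone_emb x)).
  rewrite !nf; case: (W1 == w); ring.
move=> /(_ hA); rewrite !big_cons big_nil /= !Tbar_emb /Tbar.
rewrite (_ : None \in W1) ?mulr0 /=; last by rewrite /W1 mem_cat !inE orbT.
move=> H; apply/eqP; rewrite -subr_eq0; apply/eqP; rewrite -[RHS]H; ring.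
Qed.


Lemma TWw q P t (T : word3 -> CC) (w1 w2 : word3) : twisted_trace q P t T ->
  T (w1 ++ w2) = t ^ wdeg w1 * T (w2 ++ w1).
Proof.
case=> _ h; have := h [:: (1, w1)] [:: (1, w2)].
by rewrite /evalT /mulc /gtw /= !big_cons !big_nil /= !mul1r !addr0.
Qed.

Lemma wdeg_cons g (w : word3) : wdeg (g :: w) = ldeg (Some g) + wdeg w.
Proof. by rewrite -!deg4_emb /= deg4_cons. Qed.

Lemma Zpass q P t (T : word3 -> CC) (a r b : word3) : q != 0 -> twisted_trace q P t T ->
  T (a ++ gZ :: r ++ b) = q ^ (2 * wdeg r) * T (a ++ r ++ gZ :: b).
Proof.
move=> q0 hT; elim: r a => [|g r IH] a /=.
  by rewrite /wdeg /= subrr mulr0 expr0z mul1r.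
case: g.
- rewrite (U3 _ _ (proj1 hT)) -cat1s catA IH -catA wdeg_cons mulrA qn qz //.
  congr (q ^ _ * _); rewrite /=; lia.
- rewrite (U4 _ _ (proj1 hT)) -cat1s catA IH -catA wdeg_cons mulrA exprnN qz //.
  congr (q ^ _ * _); rewrite /=; lia.
- rewrite -[gZ :: gZ :: _]cat1s catA IH -catA wdeg_cons /=.
  by congr (q ^ _ * _); ring.
Qed.

Lemma ZnPass q P t (T : word3 -> CC) (m : nat) (a r b : word3) : q != 0 -> twisted_trace q P t T ->
  T (a ++ nseq m gZ ++ r ++ b) = q ^ (2 * m%:Z * wdeg r) * T (a ++ r ++ nseq m gZ ++ b).
Proof.
move=> q0 hT; elim: m a => [|m IH] a /=.
  by rewrite mulr0 mul0r expr0z mul1r.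
rewrite -cat1s catA IH -catA /= (Zpass _ _ _ q0 hT) mulrA qz //.

congr (q ^ _ * _); rewrite intS; ring.
Qed.

Lemma recT q P t (T : word3 -> CC) (m : nat) : q != 0 -> twisted_trace q P t T ->
  \sum_(i <- iota 0 (size P)) acoef q t P m i * T (nseq (m + i) gZ) = 0.
Proof.
move=> q0 hT.
have h1 := TWw [:: gu] (gv :: nseq m gZ) hT.
have h2 := U1 [::] (nseq m gZ) (proj1 hT).
have h3 := U2 [::] (nseq m gZ) (proj1 hT).
have h4 := ZnPass m [:: gv] [:: gu] [::] q0 hT.
rewrite /= in h1 h2 h3 h4.
rewrite !cats0 in h4.
rewrite h2 h4 h3 in h1.
have -> : \sum_(i <- iota 0 (size P)) acoef q t P m i * T (nseq (m + i) gZ) =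
  q ^ (-2 * m%:Z) * (\sum_(i <- iota 0 (size P)) P`_i * q^-1 ^+ i * T (nseq i gZ ++ nseq m gZ))
  - t * (\sum_(i <- iota 0 (size P)) P`_i * q ^+ i * T (nseq i gZ ++ nseq m gZ)).
  rewrite !mulr_sumr -sumrB; apply: eq_bigr => i _.
  rewrite -nseqD addnC /acoef; ring.
rewrite h1 /wdeg /= expr1z.
have E : q ^ (-2 * m%:Z) * q ^ (2 * m%:Z * 1) = 1.
  by rewrite qz // (_ : -2 * m%:Z + 2 * m%:Z * 1 = 0) ?expr0z //; ring.
transitivity ((q ^ (-2 * m%:Z) * q ^ (2 * m%:Z * 1) - 1) * t *
  (\sum_(i <- iota 0 (size P)) P`_i * q ^+ i * T (nseq i gZ ++ nseq m gZ))); first ring.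
by rewrite E subrr !mul0r.
Qed.

Lemma agreeZ (q : CC) (P : {poly CC}) (t : CC) (T1 T2 : word3 -> CC) (n : nat) : q != 0 -> size P = n.+1 ->
  (forall m, acoef q t P m n != 0) -> twisted_trace q P t T1 -> twisted_trace q P t T2 ->
  (forall i, (i < n)%N -> T1 (nseq i gZ) = T2 (nseq i gZ)) ->
  forall k, T1 (nseq k gZ) = T2 (nseq k gZ).
Proof.
move=> q0 hP ha h1 h2 hlow k; elim/ltn_ind: k => k IH.
case: (ltnP k n) => hk; first exact: hlow.
have -> : k = (k - n + n)%N by rewrite subnK.
set m := (k - n)%N.
have r1 := recT m q0 h1; have r2 := recT m q0 h2.
rewrite hP -addn1 iotaD big_cat /= big_cons big_nil addr0 add0n in r1.
rewrite hP -addn1 iotaD big_cat /= big_cons big_nil addr0 add0n in r2.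
have Es : \sum_(i <- iota 0 n) acoef q t P m i * T1 (nseq (m + i) gZ) =
          \sum_(i <- iota 0 n) acoef q t P m i * T2 (nseq (m + i) gZ).
  rewrite big_seq [RHS]big_seq; apply: eq_bigr => i; rewrite mem_iota => hi.
  rewrite IH //; rewrite /m; lia.
rewrite Es in r1.
have : acoef q t P m n * (T1 (nseq (m + n) gZ) - T2 (nseq (m + n) gZ)) = 0.
  apply/eqP; rewrite mulrBr subr_eq0; apply/eqP.
  by apply: (addrI (\sum_(i <- iota 0 n) acoef q t P m i * T2 (nseq (m + i) gZ))); rewrite r1 r2.
move/eqP; rewrite mulf_eq0 (negbTE (ha m)) /= subr_eq0 => /eqP.
by rewrite addnC.
Qed.

Lemma qpos_ne1 (q : CC) (k : nat) : `|q| < 1 -> (k != 0)%N -> q ^+ k != 1.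
Proof.
move=> q1 k0; apply/eqP => h.
have : `|q ^+ k| < 1 by rewrite normrX exprn_ilt1.
by rewrite h normr1 ltxx.
Qed.

Lemma qz_ne1 (q : CC) (z : int) : `|q| < 1 -> z != 0 -> q ^ z != 1.
Proof.
move=> q1; case: z => [k|k] hz.
  by rewrite -exprnP; apply: qpos_ne1 => //; move: hz; rewrite eqz_nat.
by rewrite NegzE -exprnN invr_eq1; apply: qpos_ne1.
Qed.

Lemma fix0 (c X : CC) : c != 1 -> X = c * X -> X = 0.
Proof.
move=> c1 h; apply/eqP; have : (1 - c) * X == 0 by rewrite mulrBl mul1r -h subrr.
by rewrite mulf_eq0 subr_eq0 eq_sym (negbTE c1).
Qed.

Lemma wdeg_nseq (x : gen) k : wdeg (nseq k x) = k%:Z * ldeg (Some x).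
Proof.
elim: k => [|k IH]; first by rewrite /wdeg /= subrr mul0r.
by rewrite /= wdeg_cons IH intS; ring.
Qed.

Lemma zero_pow q P t (T : word3 -> CC) (x : gen) (k m : nat) :
  q != 0 -> `|q| < 1 -> t != 1 -> t != 0 -> x != gZ -> (0 < k)%N ->
  twisted_trace q P t T -> T (nseq k x ++ nseq m gZ) = 0.
Proof.
move=> q0 q1 t1 t0 xZ k0 hT.
have hd : ldeg (Some x) != 0 by case: x xZ.
case: m => [|m].
  rewrite cats0; case: k k0 => // k _.
  have h := TWw [:: x] (nseq k x) hT.
  rewrite (_ : nseq k x ++ [:: x] = nseq k.+1 x) in h; last first.
    by rewrite -[[:: x]]/(nseq 1 x) -nseqD addn1.
  apply: (fix0 _ h).
  rewrite wdeg_cons /wdeg /= subrr addr0.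
  by case: x xZ {hd h} => //= _; rewrite ?expr1z ?exprN1 ?invr_eq1.
have h1 := TWw (nseq m.+1 gZ) (nseq k x) hT.
have h2 := ZnPass m.+1 [::] (nseq k x) [::] q0 hT.
rewrite /= !cats0 in h2.
rewrite wdeg_nseq /= mulr0 expr0z mul1r h2 in h1.
apply: (fix0 _ (esym h1)).
rewrite wdeg_nseq; apply: qz_ne1 => //.
rewrite !mulf_neq0 //.
by rewrite eqz_nat; clear h1 h2; case: k k0.
Qed.


Fixpoint cz (q : CC) (w : word3) : CC :=
  match w with
  | [::] => 1
  | gZ :: w' => q ^ (2 * wdeg w') * cz q w'
  | _ :: w' => cz q w'
  end.

Definition strip (w : word3) : word3 := [seq g <- w | g != gZ].
Definition nz (w : word3) : nat := count_mem gZ w.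

Lemma norm q P t (T : word3 -> CC) (w a : word3) (j : nat) : q != 0 -> twisted_trace q P t T ->
  T (a ++ w ++ nseq j gZ) = cz q w * T (a ++ strip w ++ nseq (nz w + j) gZ).
Proof.
move=> q0 hT; elim: w a j => [|g w IH] a j /=; first by rewrite mul1r.
case: g => /=.
- by rewrite -cat1s catA IH /strip /nz /= -catA.
- by rewrite -cat1s catA IH /strip /nz /= -catA.
- rewrite (Zpass _ _ _ q0 hT) -[gZ :: nseq j gZ]/(nseq j.+1 gZ) IH /strip /nz /=.
  by rewrite mulrA addnS add0n.
Qed.

Lemma adj (s : word3) : all (fun g => g != gZ) s ->
  (exists s1 s2, s = s1 ++ gu :: gv :: s2) \/ (exists s1 s2, s = s1 ++ gv :: gu :: s2) \/
  (exists x, x != gZ /\ s = nseq (size s) x).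
Proof.
elim: s => [|x s IH] /=; first by move=> _; right; right; exists gu.
case/andP=> xZ /IH [[s1 [s2 ->]]|[[s1 [s2 ->]]|[y [yZ hy]]]].
- by left; exists (x :: s1), s2.
- by right; left; exists (x :: s1), s2.
clear IH; case: s hy => [|z s] hy.
  by right; right; exists x.
move: hy => /= [ez hs].
have [exy|nxy] := eqVneq x y.
  by right; right; exists x; split => //; rewrite exy ez /= -hs.
move: ez hs xZ yZ nxy; case: x; case: y => //= -> _ _ _ _.
all: try (by left; exists [::], s).
all: try (by right; left; exists [::], s).
Qed.

Lemma strip_cat (x y : word3) : strip (x ++ y) = strip x ++ strip y.
Proof. by rewrite /strip filter_cat. Qed.
Lemma strip_Zn k : strip (nseq k gZ) = [::].
Proof. by elim: k. Qed.
Lemma size_strip x : (size (strip x) <= size x)%N.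
Proof. by rewrite /strip size_filter count_size. Qed.

Lemma uniqT q P t (T1 T2 : word3 -> CC) : q != 0 -> `|q| < 1 -> t != 1 -> t != 0 ->
  twisted_trace q P t T1 -> twisted_trace q P t T2 ->
  (forall k, T1 (nseq k gZ) = T2 (nseq k gZ)) -> forall w, T1 w = T2 w.
Proof.
move=> q0 q1 t1 t0 h1 h2 hZ.
suff H : forall N (w : word3), (size (strip w) < N)%N -> T1 w = T2 w.
  by move=> w; apply: (H (size (strip w)).+1).
elim=> // N IH w hw.
have E1 := norm w [::] 0 q0 h1; have E2 := norm w [::] 0 q0 h2.
rewrite /= cats0 in E1 E2.
rewrite E1 E2; congr (_ * _).
have hs : all (fun g => g != gZ) (strip w) by apply: filter_all.
move: (nz w + 0)%N hs hw; set s := strip w => j hs hw.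
case: (adj hs) => [[s1 [s2 es]]|[[s1 [s2 es]]|[x [xZ es]]]].
- rewrite es -catA /= (U1 _ _ (proj1 h1)) (U1 _ _ (proj1 h2)).
  apply: eq_bigr => i _; congr (_ * _); apply: IH.
  rewrite !strip_cat !strip_Zn /= cats0 size_cat.
  have := size_strip s1; have := size_strip s2.
  move: hw; rewrite es size_cat /=; lia.
- rewrite es -catA /= (U2 _ _ (proj1 h1)) (U2 _ _ (proj1 h2)).
  apply: eq_bigr => i _; congr (_ * _); apply: IH.
  rewrite !strip_cat !strip_Zn /= cats0 size_cat.
  have := size_strip s1; have := size_strip s2.
  move: hw; rewrite es size_cat /=; lia.
- move: es; case hk: (size s) => [|k] es.
    by rewrite es /= hZ.
  by rewrite es (@zero_pow q P t T1 x k.+1 j) // (@zero_pow q P t T2 x k.+1 j).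
Qed.

Unset Implicit Arguments.
Set Strict Implicit.

Theorem proposition5p5 (q : CC) (P : {poly CC}) (n : nat) (t : CC)
  (hq0 : 0 < `|q|) (hq1 : `|q| < 1)
  (hP : size P = n.+1) (hn : (1 <= n)%N)
  (ht0 : t != 0) (ht : forall k : nat, t != q ^- (2 * k)) :
  (forall c : 'I_n -> CC, exists T : word3 -> CC,
      twisted_trace q P t T /\ forall i : 'I_n, T (nseq i gZ) = c i) /\
  (forall T1 T2 : word3 -> CC, twisted_trace q P t T1 -> twisted_trace q P t T2 ->
      (forall i : 'I_n, T1 (nseq i gZ) = T2 (nseq i gZ)) -> T1 =1 T2).
Proof.
have q0 : q != 0 by rewrite -normr_gt0.
have t1 : t != 1 by have := ht 0%N; rewrite muln0 expr0 invr1.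
have sP0 : (0 < size P)%N by rewrite hP.
have ha := acoef_nz q0 hP ht.
split.
  move=> c.
  pose cc (k : nat) : CC := if insub k is Some i then c i else 0.
  exists (T3 q P (tauf q t P n cc)); split.
    apply: T3_twisted => //; exact: tau_rec.
  move=> i; rewrite T3_Zi tn_next /nextv ltn_ord /cc.
  by rewrite (valK i).
move=> T1 T2 h1 h2 hlow; apply: (uniqT q0 hq1 t1 ht0 h1 h2).
apply: (agreeZ q0 hP ha h1 h2) => i hi.
exact: (hlow (Ordinal hi)).
Qed.
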